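(* Let $d,s\geq 2$ be integers and let $t\geq 1$ be a real number with $t\leq d^{1/s}/s$. Let $G$ be a $K_{s,s}$-free graph of minimum degree at least $d$, and let $v$ be a vertex of $G$. Then fewer than $st$ vertices $u\in V(G)$ satisfy \[ |N(u)\cap N(v)|\geq \frac{4}{t}\,|N(v)|.\]
   Context: $N(x)$ denotes the neighbourhood of a vertex $x$ in $G$. A graph is $K_{s,s}$-free if it does not contain the complete bipartite graph $K_{s,s}$ as a (not necessarily induced) subgraph. *)

(* Defs.v *)
From HB Require Import structures.
From mathcomp Require Import all_boot all_order all_algebra.
From mathcomp Require Import reals exp.
Set Implicit Arguments. Unset Strict Implicit. Unset Printing Implicit Defensive.

Definition simple_graph (T : finType) (e : rel T) : Prop :=
  symmetric e /\ irreflexive e.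

Definition nbhd (T : finType) (e : rel T) (x : T) : {set T} := [set y | e x y].

Definition min_deg_ge (T : finType) (e : rel T) (d : nat) : Prop :=
  forall x : T, d <= #|nbhd e x|.

Definition has_Kss (T : finType) (e : rel T) (s : nat) : Prop :=
  exists A B : {set T}, [/\ #|A| = s, #|B| = s, [disjoint A & B] &
    forall a b, a \in A -> b \in B -> e a b].

Definition Kss_free (T : finType) (e : rel T) (s : nat) : Prop := ~ has_Kss e s.

(* Main.v *)
Require Import Defs.
From HB Require Import structures.
From mathcomp Require Import all_boot all_order all_algebra.
From mathcomp Require Import reals exp.
Import Order.TTheory GRing.Theory Num.Theory.
Local Open Scope ring_scope.
From mathcomp Require Import ring lra zify.
Lemma ffact_le_exp (n m : nat) : (n ^_ m <= n ^ m)%N.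
Proof.
elim: m => [|m IH]; first by rewrite ffactn0 expn0.
by rewrite ffactnSr expnSr leq_mul // leq_subr.
Qed.

Lemma exp_le_ffact (d s m : nat) : (m <= s)%N -> ((d - s.-1) ^ m <= d ^_ m)%N.
Proof.
elim: m => [|m IH] Hm; first by rewrite ffactn0 expn0.
rewrite ffactnSr expnSr leq_mul ?IH ?(ltnW Hm) //.
apply: leq_sub2l; case: s Hm {IH} => //= s'; by rewrite ltnS.
Qed.

Lemma pt_ineq (R : realDomainType) (a b : R) (m : nat) : 0 <= a -> 0 <= b ->
  a ^+ m * b + b ^+ m * a <= a ^+ m.+1 + b ^+ m.+1.
Proof.
move=> a0 b0.
have H : 0 <= (a ^+ m - b ^+ m) * (a - b).
  have [ab|ba] := lerP a b.
    by apply: mulr_le0; rewrite subr_le0 //; apply: lerXn2r; rewrite ?nnegrE.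
  apply: mulr_ge0; rewrite subr_ge0; last exact: ltW.
  by apply: lerXn2r; rewrite ?nnegrE ?(ltW ba).
rewrite !exprSr. move: H; set X := a ^+ m; set Y := b ^+ m => H. nra.
Qed.

Lemma cheb (R : realDomainType) (I : finType) (A : {set I}) (y : I -> R) (m : nat) :
  (forall i, 0 <= y i) ->
  (\sum_(i in A) y i ^+ m) * (\sum_(i in A) y i) <= #|A|%:R * \sum_(i in A) y i ^+ m.+1.
Proof.
move=> y0.
set P := \sum_(i in A) y i ^+ m.+1.
have E1 : (\sum_(i in A) y i ^+ m) * (\sum_(i in A) y i) =
          \sum_(i in A) \sum_(j in A) y i ^+ m * y j.
  rewrite mulr_suml; apply: eq_bigr => i _; by rewrite mulr_sumr.
have E2 : (\sum_(i in A) y i ^+ m) * (\sum_(i in A) y i) =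
          \sum_(i in A) \sum_(j in A) y j ^+ m * y i.
  by rewrite E1 exchange_big.
have E3 : \sum_(i in A) \sum_(j in A) (y i ^+ m.+1 + y j ^+ m.+1) = #|A|%:R * P + #|A|%:R * P.
  transitivity (\sum_(i in A) (y i ^+ m.+1 *+ #|A| + P)).
    by apply: eq_bigr => i _; rewrite big_split /= sumr_const.
  by rewrite big_split /= sumr_const sumrMnl -/P !mulr_natl.
have : (\sum_(i in A) y i ^+ m) * (\sum_(i in A) y i) *+ 2 <= #|A|%:R * P *+ 2.
  rewrite mulr2n {1}E1 E2 -big_split /= mulr2n -E3.
  apply: ler_sum => i _; rewrite -big_split /=; apply: ler_sum => j _.
  exact: pt_ineq.
by rewrite lerMn2r.
Qed.

Lemma power_mean (R : realDomainType) (I : finType) (A : {set I}) (y : I -> R) (m : nat) :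
  (forall i, 0 <= y i) ->
  (\sum_(i in A) y i) ^+ m.+1 <= #|A|%:R ^+ m * \sum_(i in A) y i ^+ m.+1.
Proof.
move=> y0; elim: m => [|m IH]; first by rewrite expr0 mul1r.
have S0 : 0 <= \sum_(i in A) y i by apply: sumr_ge0.
rewrite exprSr.
apply: le_trans (ler_wpM2r S0 IH) _.
rewrite -mulrA exprSr -mulrA; apply: ler_wpM2l; first exact: exprn_ge0.
exact: cheb.
Qed.
Lemma card_ind (T : finType) (B : {set T}) : #|B| = (\sum_x (x \in B))%N.
Proof. rewrite -sum1_card big_mkcond; apply: eq_bigr => x _; by case: (x \in B). Qed.

Lemma edge_count (T : finType) (e : rel T) (esym : symmetric e) (A U : {set T}) :
 (\sum_(w in A) #|U :&: nbhd e w| = \sum_(u in U) #|nbhd e u :&: A|)%N.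
Proof.
transitivity (\sum_(w in A) \sum_(u in U) (e w u : nat))%N.
  apply: eq_bigr => w _; rewrite card_ind [RHS]big_mkcond; apply: eq_bigr => u _.
  by rewrite /nbhd !inE; case: (u \in U).
rewrite exchange_big; apply: eq_bigr => u _; rewrite card_ind [LHS]big_mkcond.
apply: eq_bigr => w _; rewrite /nbhd !inE esym.
by case: (w \in A); rewrite ?andbT ?andbF.
Qed.

Lemma comb_bound (T : finType) (e : rel T) (s : nat) : simple_graph e -> Kss_free e s ->
  (0 < s)%N -> forall (A U : {set T}),
 (\sum_(w in A) 'C(#|U :&: nbhd e w|, s) <= s.-1 * 'C(#|U|, s))%N.
Proof.
move=> [esym eirr] free s0 A U.
set Ss := [set S : {set T} | S \subset U & #|S| == s].
have -> : (\sum_(w in A) 'C(#|U :&: nbhd e w|, s) =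
    \sum_(S in Ss) #|[set w in A | S \subset nbhd e w]|)%N.
  transitivity (\sum_w \sum_(S : {set T})
     [&& w \in A, S \subset U :&: nbhd e w & #|S| == s])%N.
    rewrite big_mkcond; apply: eq_bigr => w _.
    case: (w \in A) => /=; last by rewrite big1.
    rewrite -cards_draws card_ind; apply: eq_bigr => S _; by rewrite inE.
  rewrite exchange_big [RHS]big_mkcond; apply: eq_bigr => S _.
  case HS: (S \in Ss).
    rewrite [RHS]card_ind; apply: eq_bigr => w _; move: HS; rewrite !inE subsetI => /andP [-> ->].
    by rewrite andbT.
  rewrite big1 // => w _; move: HS; rewrite !inE subsetI.
  by case: (w \in A); case: (S \subset U); case: (#|S| == s); rewrite ?andbF.
rewrite -[X in (_ <= _ * X)%N](cards_draws U s) -/Ss mulnC -sum_nat_const.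
apply: leq_sum => S; rewrite inE => /andP [SU /eqP Ss'].
set W := [set w in A | S \subset nbhd e w].
rewrite leqNgt; apply/negP; rewrite (prednK s0) => Hs.
have : (0 < #|[set B : {set T} | B \subset W & #|B| == s]|)%N by rewrite cards_draws bin_gt0.
case/card_gt0P => B; rewrite inE => /andP [BW /eqP Bs].
apply: free; exists S, B; split => //.
  rewrite -setI_eq0; apply/eqP/setP => x; rewrite !inE; apply/negP => /andP [xS xB].
  have := subsetP BW x xB; rewrite inE => /andP [_ /subsetP /(_ x xS)].
  by rewrite /nbhd inE eirr.
move=> a b aS bB; have := subsetP BW b bB; rewrite inE => /andP [_ /subsetP /(_ a aS)].
by rewrite /nbhd inE esym.
Qed.

Theorem lemma2p1 (R : realType) (d s : nat) (t : R) (T : finType) (e : rel T) (v : T) :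
  (2 <= d)%N -> (2 <= s)%N ->
  1 <= t -> t <= (d%:R `^ (s%:R)^-1) / s%:R ->
  simple_graph e -> Kss_free e s -> min_deg_ge e d ->
  #|[set u | 4 / t * #|nbhd e v|%:R <= #|nbhd e u :&: nbhd e v|%:R]|%:R < s%:R * t.
Proof.
move=> d2 s2 t1 tle sg free mindeg.
have [esym eirr] := sg.
destruct s as [|s1]; first by [].
set A := nbhd e v.
set U := [set u | _].
rewrite ltNge; apply/negP => Hk.
have t0 : 0 < t by apply: lt_le_trans t1; exact: ltr01.
have nd : (d <= #|A|)%N := mindeg v.
have sp : (0 : R) < s1.+1%:R by rewrite ltr0n.
have hst : (s1.+1%:R * t) ^+ s1.+1 <= d%:R.
  have h1 : s1.+1%:R * t <= d%:R `^ (s1.+1%:R)^-1.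
    by rewrite mulrC -ler_pdivlMr.
  have st0 : 0 <= s1.+1%:R * t by rewrite mulr_ge0 // ltW.
  apply: le_trans (lerXn2r _ _ _ h1) _; rewrite ?nnegrE ?powR_ge0 //.
  rewrite -powR_mulrn ?powR_ge0 // -powRrM mulVf ?powRr1 //.
  by rewrite gt_eqF.
set dw := fun w => #|U :&: nbhd e w|.
have Hcomb : (\sum_(w in A) (dw w - s1) ^ s1.+1 <= s1 * #|U| ^ s1.+1)%N.
  apply: (@leq_trans (\sum_(w in A) 'C(dw w, s1.+1) * s1.+1`!)%N).
    apply: leq_sum => w _; rewrite bin_ffact; exact: (@exp_le_ffact _ s1.+1).
  rewrite -big_distrl /=.
  have HB := @comb_bound T e s1.+1 sg free (ltn0Sn s1) A U.
  apply: leq_trans (leq_mul HB (leqnn (s1.+1)`!)) _.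
  by rewrite -mulnA bin_ffact leq_mul2l ffact_le_exp orbT.
have HE := @edge_count T e esym A U.
set Y := \sum_(w in A) ((dw w - s1)%:R : R).
have Ha : #|U|%:R * (4 / t * #|A|%:R) <= ((\sum_(u in U) #|nbhd e u :&: A|)%:R : R).
  rewrite natr_sum mulr_natl -sumr_const; apply: ler_sum => u; by rewrite inE.
have Hb : ((\sum_(w in A) dw w)%:R : R) <= Y + #|A|%:R * s1%:R.
  have : (\sum_(w in A) dw w <= \sum_(w in A) (dw w - s1) + #|A| * s1)%N.
    rewrite -sum_nat_const -big_split /=; apply: leq_sum => w _; lia.
  by rewrite -(ler_nat R) natrD natrM !natr_sum.
have Hc : Y ^+ s1.+1 <= #|A|%:R ^+ s1 * \sum_(w in A) ((dw w - s1)%:R : R) ^+ s1.+1.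
  by apply: power_mean => w; exact: ler0n.
have Hd : \sum_(w in A) ((dw w - s1)%:R : R) ^+ s1.+1 <= s1%:R * #|U|%:R ^+ s1.+1.
  move: Hcomb; rewrite -(ler_nat R) natrM natrX natr_sum.
  by under eq_bigr do rewrite natrX.
rewrite HE in Hb.
have Hab := le_trans Ha Hb.
move: Hab Hc Hd Hk hst.
set n := (#|A|%:R : R); set k := (#|U|%:R : R); set P := \sum_(w in A) _.
move=> Hab Hc Hd Hk hst.
have n0 : 0 <= n by exact: ler0n.
have dn : (d%:R : R) <= n by rewrite ler_nat.
set q := k / t.
have kq : k = q * t by rewrite /q divfK // gt_eqF.
have qs : s1.+1%:R <= q by rewrite /q ler_pdivlMr.
have q0 : 0 < q by apply: lt_le_trans qs.
have HY : 3 * q * n <= Y.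
  have e4 : k * (4 / t * n) = 4 * q * n by rewrite /q; field; rewrite gt_eqF.
  rewrite e4 in Hab; move: qs; rewrite -natr1 => qs'.
  nra.
clearbody q.
have H3 : (3 * q * n) ^+ s1.+1 <= Y ^+ s1.+1.
  apply: lerXn2r => //; rewrite nnegrE.
    by rewrite mulr_ge0 // mulr_ge0 // ltW.
  by apply: sumr_ge0 => w _; exact: ler0n.
have H4 := le_trans H3 (le_trans Hc (ler_wpM2l (exprn_ge0 _ n0) Hd)).
rewrite kq !exprMn (exprSr n) in H4.
move: H4 hst; rewrite exprMn.
set Q := q ^+ s1.+1; set N1 := n ^+ s1; set Tt := t ^+ s1.+1; set C := (3 : R) ^+ s1.+1.
move=> H4 hst.
have Q0 : 0 < Q by rewrite exprn_gt0.
have np : 0 < n by apply: lt_le_trans dn; rewrite ltr0n; apply: leq_trans d2.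
have N10 : 0 < N1 by rewrite exprn_gt0.
have T0 : 0 < Tt by rewrite exprn_gt0.
have H5 : C * n <= s1%:R * Tt.
  rewrite -(ler_pM2l (mulr_gt0 Q0 N10)).
  have -> : Q * N1 * (C * n) = C * Q * (N1 * n) by ring.
  by have -> : Q * N1 * (s1%:R * Tt) = N1 * (s1%:R * (Q * Tt)) by ring.
have H6 : C * (s1.+1%:R ^+ s1.+1) * Tt <= s1%:R * Tt.
  rewrite -mulrA; apply: le_trans H5; apply: ler_wpM2l.
    by rewrite exprn_ge0.
  exact: le_trans hst dn.
rewrite ler_pM2r // /C -!natrX -natrM ler_nat in H6.
have h7 : (s1.+1 < s1.+1 ^ s1.+1)%N by apply: ltn_expl.
have h8 : (s1.+1 ^ s1.+1 <= 3 ^ s1.+1 * s1.+1 ^ s1.+1)%N by rewrite leq_pmull // expn_gt0.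
by move: (leq_trans (leq_trans h7 h8) H6) => /ltnW; rewrite ltnn.
Qed.
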